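(* Let $A$ be a Noetherian skew brace (every ascending chain of ideals of $A$ is eventually stationary). Then the set of minimal prime ideals of $A$ is finite.
   Context: A (left) skew brace is a triple $(A,+,\circ)$ where $(A,+)$ and $(A,\circ)$ are groups such that $a\circ(b+c)=a\circ b-a+a\circ c$ for all $a,b,c$; common identity $e$. Put $\lambda_a(b)=-a+a\circ b$, $a*b=-a+a\circ b-b$. An ideal is a normal subgroup $I$ of both $(A,+)$ and $(A,\circ)$ with $\lambda_a(I)\subseteq I$ for all $a$. For subsets $I,J$, $I*J=\{i*j\mid i\in I,j\in J\}$. A prime ideal is a proper ideal $P$ such that for any subsets $I,J$ of $A$, $I*J\subseteq P$ implies $I\subseteq P$ or $J\subseteq P$. A minimal prime ideal is a prime ideal containing no strictly smaller prime ideal. *)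

(* Defs.v *)
From Stdlib Require Import List.

Record SkewBrace := {
  sb_car :> Type;
  sb_add : sb_car -> sb_car -> sb_car;
  sb_opp : sb_car -> sb_car;
  sb_circ : sb_car -> sb_car -> sb_car;
  sb_cinv : sb_car -> sb_car;
  sb_e : sb_car;  (* common identity *)
  sb_addA : forall a b c, sb_add a (sb_add b c) = sb_add (sb_add a b) c;
  sb_add0l : forall a, sb_add sb_e a = a;
  sb_add0r : forall a, sb_add a sb_e = a;
  sb_addNl : forall a, sb_add (sb_opp a) a = sb_e;
  sb_addNr : forall a, sb_add a (sb_opp a) = sb_e;
  sb_circA : forall a b c, sb_circ a (sb_circ b c) = sb_circ (sb_circ a b) c;
  sb_circ1l : forall a, sb_circ sb_e a = a;
  sb_circ1r : forall a, sb_circ a sb_e = a;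
  sb_circVl : forall a, sb_circ (sb_cinv a) a = sb_e;
  sb_circVr : forall a, sb_circ a (sb_cinv a) = sb_e;
  sb_compat : forall a b c,
    sb_circ a (sb_add b c) = sb_add (sb_add (sb_circ a b) (sb_opp a)) (sb_circ a c)
}.

Section Defs.
Variable A : SkewBrace.

Definition sb_lambda (a b : A) : A := sb_add A (sb_opp A a) (sb_circ A a b).
Definition sb_star (a b : A) : A :=
  sb_add A (sb_add A (sb_opp A a) (sb_circ A a b)) (sb_opp A b).

Definition sb_subset (I J : A -> Prop) : Prop := forall x, I x -> J x.

Definition is_ideal (I : A -> Prop) : Prop :=
  I (sb_e A)
  /\ (forall x y, I x -> I y -> I (sb_add A x y))
  /\ (forall x, I x -> I (sb_opp A x))
  /\ (forall a x, I x -> I (sb_add A (sb_add A a x) (sb_opp A a)))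
  /\ (forall x y, I x -> I y -> I (sb_circ A x y))
  /\ (forall x, I x -> I (sb_cinv A x))
  /\ (forall a x, I x -> I (sb_circ A (sb_circ A a x) (sb_cinv A a)))
  /\ (forall a x, I x -> I (sb_lambda a x)).

Definition is_prime_ideal (P : A -> Prop) : Prop :=
  is_ideal P /\ (exists x, ~ P x) /\
  forall I J : A -> Prop,
    (forall i j, I i -> J j -> P (sb_star i j)) ->
    sb_subset I P \/ sb_subset J P.

Definition is_minimal_prime_ideal (P : A -> Prop) : Prop :=
  is_prime_ideal P /\
  forall Q, is_prime_ideal Q -> sb_subset Q P -> sb_subset P Q.

Definition noetherian : Prop :=
  forall I : nat -> A -> Prop,
    (forall n, is_ideal (I n)) ->
    (forall n, sb_subset (I n) (I (S n))) ->
    exists N, forall n, N <= n -> forall x, I n x <-> I N x.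
End Defs.

(* Main.v *)
Require Import Defs.
From Stdlib Require Import List.
From Stdlib Require Import Classical ClassicalEpsilon.

Section Proof.
Variable A : SkewBrace.

Definition gen (S : A -> Prop) (x : A) : Prop :=
  forall J, is_ideal A J -> sb_subset A S J -> J x.

Lemma gen_ideal S : is_ideal A (gen S).
Proof.
  unfold gen; repeat split; intros; unfold is_ideal in *;
  repeat match goal with H : forall J, (_ /\ _) -> _ -> _ |- _ =>
    specialize (H J ltac:(tauto) ltac:(assumption)) end;
  intuition.
Qed.

Lemma gen_incl S : sb_subset A S (gen S).
Proof. intros x Hx J _ HJ; auto. Qed.

Lemma gen_min S J : is_ideal A J -> sb_subset A S J -> sb_subset A (gen S) J.
Proof. intros HJ HS x Hx; apply Hx; auto. Qed.

Definition C (I : A -> Prop) : Prop :=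
  exists l : list (A -> Prop),
    (forall Q, In Q l -> is_prime_ideal A Q /\ sb_subset A I Q) /\
    (forall P, is_prime_ideal A P -> sb_subset A I P ->
       exists Q, In Q l /\ sb_subset A Q P).

Definition bigger (I J : A -> Prop) : Prop :=
  is_ideal A J /\ sb_subset A I J /\ exists x, J x /\ ~ I x.

Lemma step I : is_ideal A I -> (forall J, bigger I J -> C J) -> C I.
Proof.
  intros HI IH.
  destruct (classic (is_prime_ideal A I)) as [Hp|Hnp].
  - exists (I :: nil); split.
    + intros Q [<-|[]]; split; [auto| intros x; auto].
    + intros P _ HP; exists I; split; [left; auto|auto].
  - destruct (classic (exists x, ~ I x)) as [Hprop|Hnprop].
    2:{ exists nil; split; [intros Q []|].
        intros P (_&(x&Hx)&_) HP. exfalso; apply Hnprop; exists x; auto. }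
    destruct (classic (forall X Y : A -> Prop,
      (forall i j, X i -> Y j -> I (sb_star A i j)) ->
      sb_subset A X I \/ sb_subset A Y I)) as [Hc|Hc].
    { exfalso; apply Hnp; split; [auto|split; auto]. }
    apply not_all_ex_not in Hc; destruct Hc as [X Hc].
    apply not_all_ex_not in Hc; destruct Hc as [Y Hc].
    apply imply_to_and in Hc; destruct Hc as [HXY Hc].
    apply not_or_and in Hc; destruct Hc as [HX HY].
    assert (HbX : bigger I (gen (fun z => I z \/ X z))).
    { split; [apply gen_ideal|split].
      - intros z Hz; apply gen_incl; auto.
      - apply not_all_ex_not in HX; destruct HX as [x Hx].
        apply imply_to_and in Hx; destruct Hx as [Hx1 Hx2].
        exists x; split; auto; apply gen_incl; auto. }
    assert (HbY : bigger I (gen (fun z => I z \/ Y z))).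
    { split; [apply gen_ideal|split].
      - intros z Hz; apply gen_incl; auto.
      - apply not_all_ex_not in HY; destruct HY as [x Hx].
        apply imply_to_and in Hx; destruct Hx as [Hx1 Hx2].
        exists x; split; auto; apply gen_incl; auto. }
    destruct (IH _ HbX) as [l1 [Hl1a Hl1b]].
    destruct (IH _ HbY) as [l2 [Hl2a Hl2b]].
    exists (l1 ++ l2); split.
    + intros Q HQ; apply in_app_or in HQ; destruct HQ as [HQ|HQ].
      * destruct (Hl1a _ HQ) as [H1 H2]; split; auto.
        intros z Hz; apply H2; apply gen_incl; auto.
      * destruct (Hl2a _ HQ) as [H1 H2]; split; auto.
        intros z Hz; apply H2; apply gen_incl; auto.
    + intros P HP HIP.
      destruct HP as [HPi [HPp HPc]] eqn:E.
      destruct (HPc X Y) as [H|H].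
      * intros i j Hi Hj; apply HIP; auto.
      * destruct (Hl1b P (conj HPi (conj HPp HPc))) as [Q [HQ1 HQ2]].
        { apply gen_min; auto. intros z [Hz|Hz]; auto. }
        exists Q; split; auto; apply in_or_app; auto.
      * destruct (Hl2b P (conj HPi (conj HPp HPc))) as [Q [HQ1 HQ2]].
        { apply gen_min; auto. intros z [Hz|Hz]; auto. }
        exists Q; split; auto; apply in_or_app; auto.
Qed.

Definition bad I := is_ideal A I /\ ~ C I.

Lemma bad_step I : bad I -> exists J, bad J /\ bigger I J.
Proof.
  intros [HI HC].
  apply NNPP; intro Hn; apply HC; apply step; auto.
  intros J HJ; apply NNPP; intro HCJ; apply Hn; exists J.
  split; auto; split; auto; apply HJ.
Qed.

Definition nxt (I : A -> Prop) : A -> Prop :=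
  epsilon (inhabits (fun _ : A => True)) (fun J => bad J /\ bigger I J).

Lemma all_C : noetherian A -> forall I, is_ideal A I -> C I.
Proof.
  intros HN I0 HI0. apply NNPP; intro Hb.
  set (ch := fun n => Nat.iter n nxt I0).
  assert (Hbad : forall n, bad (ch n) /\ bad (ch (S n)) /\ bigger (ch n) (ch (S n))).
  { induction n.
    - assert (bad I0) by (split; auto).
      pose proof (epsilon_spec (inhabits (fun _ : A => True))
        (fun J => bad J /\ bigger I0 J) (bad_step _ H)) as Hs.
      simpl; split; auto.
    - destruct IHn as [_ [Hn _]].
      pose proof (epsilon_spec (inhabits (fun _ : A => True))
        (fun J => bad J /\ bigger (ch (S n)) J) (bad_step _ Hn)) as Hs.
      split; auto. }
  destruct (HN ch) as [N HNN].
  - intro n; apply (Hbad n).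
  - intro n; apply (Hbad n).
  - destruct (Hbad N) as [_ [_ [_ [_ [x [Hx1 Hx2]]]]]].
    apply Hx2. apply (HNN (S N)); auto.
Qed.

End Proof.

Theorem corollary4p21 (A : SkewBrace) :
  noetherian A ->
  exists l : list (A -> Prop),
    forall P, is_minimal_prime_ideal A P ->
      exists Q, In Q l /\ (forall x, P x <-> Q x).
Proof.
  intros HN.
  destruct (all_C A HN (gen A (fun _ => False)) (gen_ideal A _)) as [l [Hl1 Hl2]].
  exists l; intros P [HP Hmin].
  destruct (Hl2 P HP) as [Q [HQ HQP]].
  { apply gen_min; [apply HP| intros x []]. }
  exists Q; split; auto.
  intros x; split; [|apply HQP].
  apply (Hmin Q); [apply (Hl1 Q HQ)|auto].
Qed.
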